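(* Let $G$ be a group, $A$ a semilattice of groups and $\Theta=(\theta,w)$ a twisted partial action of $G$ on $A$. Then $A*_\Theta G$, with $i(a)=a\delta_1$ and $j(a\delta_x)=x$, is an extension of $A$ by $G$. Moreover, the maps $\pi:A*_\Theta G\to E(A)*_\theta G$, $\pi(a\delta_x)=aa^{-1}\delta_x$, and $\kappa:E(A)*_\theta G\to G$, $\kappa(e\delta_x)=x$, are epimorphisms such that $A\overset{i}{\to}A*_\Theta G\overset{\pi}{\to}E(A)*_\theta G$ is an extension of $A$ by $E(A)*_\theta G$ and $j=\kappa\circ\pi$ (so $E(A)*_\theta G$ is, up to isomorphism, the $E$-unitary inverse semigroup associated with the extension $A*_\Theta G$ of $A$ by $G$).
   Context: A semilattice of groups is an inverse semigroup $A$ with central idempotents. A multiplier of a semigroup $T$ is a pair $(L,R)$ of maps $T\to T$ with $L(st)=L(s)t$, $R(st)=sR(t)$, $sL(t)=R(s)t$, written $ws=L(s)$, $sw=R(s)$; they form a monoid $\mathcal M(T)$ with unit group $\mathcal U(\mathcal M(T))$. A twisted partial action of $G$ on $A$ is $\Theta=(\theta,w)$ with isomorphisms $\theta_x:D_{x^{-1}}\to D_x$ between nonempty ideals and $w_{x,y}\in\mathcal U(\mathcal M(D_xD_{xy}))$ such that (i) $D_x^2=D_x$, $D_xD_y=D_yD_x$; (ii) $D_1=A$, $\theta_1=\mathrm{id}$; (iii) $\theta_x(D_{x^{-1}}D_y)=D_xD_{xy}$; (iv) $\theta_x\theta_y(s)=w_{x,y}\theta_{xy}(s)w_{x,y}^{-1}$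 for $s\in D_{y^{-1}}D_{y^{-1}x^{-1}}$; (v) $w_{1,x}=w_{x,1}$ = identity of $D_x$; (vi) $\theta_x(sw_{y,z})w_{x,yz}=\theta_x(s)w_{x,y}w_{xy,z}$ for $s\in D_{x^{-1}}D_yD_{yz}$. The crossed product $A*_\Theta G=\{a\delta_x: a\in D_x\}$ has product $a\delta_x\cdot b\delta_y=\theta_x(\theta_x^{-1}(a)b)w_{x,y}\delta_{xy}$. The maps $\theta_x$ restrict to isomorphisms $E(D_{x^{-1}})\to E(D_x)$ forming a partial action $\theta$ of $G$ on $E(A)$, and $E(A)*_\theta G=\{e\delta_x: e\in E(D_x)\}$ with $e\delta_x\cdot f\delta_y=\theta_x(\theta_x^{-1}(e)f)\delta_{xy}$. An extension of $A$ by a group $G$: inverse semigroup $U$, monomorphism $i:A\to U$, epimorphism $j:U\to G$ with $i(A)=j^{-1}(1)$. An extension of $A$ by an inverse semigroup $S$: inverse semigroup $U$, monomorphism $i:A\to U$, idempotent-separating epimorphism $\pi:U\to S$ with $i(A)=\pi^{-1}(E(S))$. *)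

(* Defs.v *)
Set Implicit Arguments.

Definition full (T : Type) : T -> Prop := fun _ => True.
Arguments full T _ : clear implicits.

Definition setprod {A : Type} (mul : A -> A -> A) (P Q : A -> Prop) : A -> Prop :=
  fun c => exists a b, P a /\ Q b /\ c = mul a b.

Definition seteq {A : Type} (P Q : A -> Prop) : Prop := forall a, P a <-> Q a.

Definition setimage {A B : Type} (f : A -> B) (P : A -> Prop) : B -> Prop :=
  fun b => exists a, P a /\ b = f a.

Definition IsGroup (G : Type) (mul : G -> G -> G) (one : G) (inv : G -> G) : Prop :=
  (forall x y z, mul (mul x y) z = mul x (mul y z)) /\
  (forall x, mul one x = x) /\ (forall x, mul x one = x) /\
  (forall x, mul (inv x) x = one) /\ (forall x, mul x (inv x) = one).

Definition IsInvSemigroupOn {T : Type} (S : T -> Prop) (mul : T -> T -> T) : Prop :=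
  (forall a b, S a -> S b -> S (mul a b)) /\
  (forall a b c, S a -> S b -> S c -> mul (mul a b) c = mul a (mul b c)) /\
  (forall a, S a -> exists b, S b /\ mul (mul a b) a = a /\ mul (mul b a) b = b /\
       (forall b', S b' -> mul (mul a b') a = a -> mul (mul b' a) b' = b' -> b' = b)).

Definition IsIdempotentOn {T : Type} (S : T -> Prop) (mul : T -> T -> T) (e : T) : Prop :=
  S e /\ mul e e = e.

Definition IsSemilatticeOfGroups (A : Type) (mul : A -> A -> A) : Prop :=
  IsInvSemigroupOn (full A) mul /\
  (forall e a, mul e e = e -> mul e a = mul a e).

Definition IsHomOn {T U : Type} (S : T -> Prop) (mulT : T -> T -> T)
  (S' : U -> Prop) (mulU : U -> U -> U) (f : T -> U) : Prop :=
  (forall a, S a -> S' (f a)) /\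
  (forall a b, S a -> S b -> f (mulT a b) = mulU (f a) (f b)).

Definition IsMonoOn {T U : Type} (S : T -> Prop) (mulT : T -> T -> T)
  (S' : U -> Prop) (mulU : U -> U -> U) (f : T -> U) : Prop :=
  IsHomOn S mulT S' mulU f /\ (forall a b, S a -> S b -> f a = f b -> a = b).

Definition IsEpiOn {T U : Type} (S : T -> Prop) (mulT : T -> T -> T)
  (S' : U -> Prop) (mulU : U -> U -> U) (f : T -> U) : Prop :=
  IsHomOn S mulT S' mulU f /\ (forall b, S' b -> exists a, S a /\ f a = b).

Definition IsIdempotentSeparatingOn {T U : Type} (S : T -> Prop) (mulT : T -> T -> T)
  (f : T -> U) : Prop :=
  forall e e', IsIdempotentOn S mulT e -> IsIdempotentOn S mulT e' -> f e = f e' -> e = e'.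

Definition IsExtensionByGroup {A U G : Type} (mulA : A -> A -> A)
  (SU : U -> Prop) (mulU : U -> U -> U) (mulG : G -> G -> G) (oneG : G)
  (i : A -> U) (j : U -> G) : Prop :=
  IsInvSemigroupOn SU mulU /\
  IsMonoOn (full A) mulA SU mulU i /\
  IsEpiOn SU mulU (full G) mulG j /\
  (forall u, SU u -> (j u = oneG <-> exists a, i a = u)).

Definition IsExtensionByInvSemigroup {A U S : Type} (mulA : A -> A -> A)
  (SU : U -> Prop) (mulU : U -> U -> U) (SS : S -> Prop) (mulS : S -> S -> S)
  (i : A -> U) (pi : U -> S) : Prop :=
  IsInvSemigroupOn SU mulU /\
  IsInvSemigroupOn SS mulS /\
  IsMonoOn (full A) mulA SU mulU i /\
  IsEpiOn SU mulU SS mulS pi /\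
  IsIdempotentSeparatingOn SU mulU pi /\
  (forall u, SU u -> (IsIdempotentOn SS mulS (pi u) <-> exists a, i a = u)).

(* (L,R) is a multiplier of the subsemigroup T of (A, mul); w s = L s, s w = R s *)
Definition IsMultiplierOn {A : Type} (mul : A -> A -> A) (T : A -> Prop)
  (L R : A -> A) : Prop :=
  (forall s, T s -> T (L s)) /\ (forall s, T s -> T (R s)) /\
  (forall s t, T s -> T t -> L (mul s t) = mul (L s) t) /\
  (forall s t, T s -> T t -> R (mul s t) = mul s (R t)) /\
  (forall s t, T s -> T t -> mul s (L t) = mul (R s) t).

(* (L,R) is a unit of the monoid M(T) with inverse (L',R');
   the product in M(T) is (L1,R1)(L2,R2) = (L1 o L2, R2 o R1), unit (id,id). *)
Definition IsUnitMultiplierOn {A : Type} (mul : A -> A -> A) (T : A -> Prop)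
  (L R L' R' : A -> A) : Prop :=
  IsMultiplierOn mul T L R /\ IsMultiplierOn mul T L' R' /\
  (forall s, T s -> L (L' s) = s /\ L' (L s) = s /\ R (R' s) = s /\ R' (R s) = s).

(* Data: D x (ideal D_x), th x (= theta_x, meaningful on D_{x^-1}),
   thi x (= theta_x^{-1}, meaningful on D_x), w_{x,y} = (wL x y, wR x y)
   with inverse w_{x,y}^{-1} = (wiL x y, wiR x y). *)
Definition IsTwistedPartialAction (G A : Type) (mulG : G -> G -> G) (oneG : G)
  (invG : G -> G) (mulA : A -> A -> A) (D : G -> A -> Prop)
  (th thi : G -> A -> A) (wL wR wiL wiR : G -> G -> A -> A) : Prop :=
  (forall x, exists a, D x a) /\
  (forall x a b, D x a -> D x (mulA a b) /\ D x (mulA b a)) /\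
  (forall x a, D (invG x) a -> D x (th x a)) /\
  (forall x a, D x a -> D (invG x) (thi x a)) /\
  (forall x a, D (invG x) a -> thi x (th x a) = a) /\
  (forall x a, D x a -> th x (thi x a) = a) /\
  (forall x a b, D (invG x) a -> D (invG x) b ->
      th x (mulA a b) = mulA (th x a) (th x b)) /\
  (forall x y, IsUnitMultiplierOn mulA (setprod mulA (D x) (D (mulG x y)))
                 (wL x y) (wR x y) (wiL x y) (wiR x y)) /\
  (forall x, seteq (setprod mulA (D x) (D x)) (D x)) /\
  (forall x y, seteq (setprod mulA (D x) (D y)) (setprod mulA (D y) (D x))) /\
  (forall a, D oneG a) /\ (forall a, th oneG a = a) /\
  (* (iii) *)
  (forall x y, seteq (setimage (th x) (setprod mulA (D (invG x)) (D y)))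
                     (setprod mulA (D x) (D (mulG x y)))) /\
  (* (iv)  theta_x theta_y (s) = (w_{x,y} theta_{xy}(s)) w_{x,y}^{-1} *)
  (forall x y s, setprod mulA (D (invG y)) (D (mulG (invG y) (invG x))) s ->
      th x (th y s) = wiR x y (wL x y (th (mulG x y) s))) /\
  (forall x s, D x s ->
      wL oneG x s = s /\ wR oneG x s = s /\ wL x oneG s = s /\ wR x oneG s = s) /\
  (* (vi) theta_x(s w_{y,z}) w_{x,yz} = theta_x(s) w_{x,y} w_{xy,z} *)
  (forall x y z s,
      setprod mulA (setprod mulA (D (invG x)) (D y)) (D (mulG y z)) s ->
      wR x (mulG y z) (th x (wR y z s)) = wR (mulG x y) z (wR x y (th x s))).

(* A *_Theta G = { a delta_x | a in D_x } *)
Definition CP {G A : Type} (D : G -> A -> Prop) : A * G -> Prop :=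
  fun p => D (snd p) (fst p).

(* a delta_x . b delta_y = theta_x(theta_x^{-1}(a) b) w_{x,y} delta_{xy} *)
Definition cp_mul {G A : Type} (mulG : G -> G -> G) (mulA : A -> A -> A)
  (th thi : G -> A -> A) (wR : G -> G -> A -> A) (p q : A * G) : A * G :=
  (wR (snd p) (snd q) (th (snd p) (mulA (thi (snd p) (fst p)) (fst q))),
   mulG (snd p) (snd q)).

(* E(A) *_theta G = { e delta_x | e in E(D_x) } *)
Definition ECP {G A : Type} (mulA : A -> A -> A) (D : G -> A -> Prop) : A * G -> Prop :=
  fun p => D (snd p) (fst p) /\ mulA (fst p) (fst p) = fst p.

Definition ecp_mul {G A : Type} (mulG : G -> G -> G) (mulA : A -> A -> A)
  (th thi : G -> A -> A) (p q : A * G) : A * G :=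
  (th (snd p) (mulA (thi (snd p) (fst p)) (fst q)), mulG (snd p) (snd q)).

Definition cp_i {G A : Type} (oneG : G) (a : A) : A * G := (a, oneG).
Definition cp_j {G A : Type} (p : A * G) : G := snd p.
Definition cp_pi {G A : Type} (mulA : A -> A -> A) (invA : A -> A) (p : A * G) : A * G :=
  (mulA (fst p) (invA (fst p)), snd p).
Definition cp_kappa {G A : Type} (p : A * G) : G := snd p.

(* Main.v *)
Require Import Defs.
From Stdlib Require Import FunctionalExtensionality PropExtensionality.

Section Main.
Variables (G : Type) (mulG : G -> G -> G) (oneG : G) (invG : G -> G).
Hypothesis HG : IsGroup mulG oneG invG.

Lemma gA x y z : mulG (mulG x y) z = mulG x (mulG y z). Proof. apply HG. Qed.
Lemma g1l x : mulG oneG x = x. Proof. apply HG. Qed.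
Lemma g1r x : mulG x oneG = x. Proof. apply HG. Qed.
Lemma gVl x : mulG (invG x) x = oneG. Proof. apply HG. Qed.
Lemma gVr x : mulG x (invG x) = oneG. Proof. apply HG. Qed.
Lemma guniq x y : mulG x y = oneG -> y = invG x.
Proof. intro H. rewrite <- (g1l y), <- (gVl x), gA, H, g1r. reflexivity. Qed.
Lemma gidem x : mulG x x = x -> x = oneG.
Proof. intro H. rewrite <- (gVl x). rewrite <- H at 3. rewrite <- gA, gVl. symmetry. apply g1l. Qed.
Lemma ginv1 : invG oneG = oneG.
Proof. symmetry. apply guniq. apply g1l. Qed.
Lemma ginvinv x : invG (invG x) = x.
Proof. symmetry. apply guniq. apply gVl. Qed.
Lemma ginvM x y : invG (mulG x y) = mulG (invG y) (invG x).
Proof. symmetry. apply guniq. rewrite gA, <- (gA y), gVr, g1l. apply gVr. Qed.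
Lemma gKl x y : mulG x (mulG (invG x) y) = y.
Proof. rewrite <- gA, gVr. apply g1l. Qed.
Lemma gKVl x y : mulG (invG x) (mulG x y) = y.
Proof. rewrite <- gA, gVl. apply g1l. Qed.
Variables (A : Type) (mulA : A -> A -> A) (invA : A -> A).
Hypothesis HA : IsSemilatticeOfGroups mulA.
Hypothesis HinvA : forall a, mulA (mulA a (invA a)) a = a /\
                     mulA (mulA (invA a) a) (invA a) = invA a.
Local Infix "**" := mulA (at level 40, left associativity).
Local Notation i := invA.
Local Notation E a := (mulA a (invA a)) (only parsing).

Lemma sA a b c : a ** b ** c = a ** (b ** c).
Proof. destruct HA as [[_ [H _]] _]. apply H; exact I. Qed.
Lemma cent e : e ** e = e -> forall a, e ** a = a ** e.
Proof. destruct HA as [_ H]. intros; apply H; auto. Qed.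
Lemma uniq a b : a ** b ** a = a -> b ** a ** b = b -> b = i a.
Proof.
  intros H1 H2. destruct HA as [[_ [_ H]] _]. destruct (H a I) as [b0 [_ [_ [_ H3]]]].
  rewrite (H3 b I H1 H2). symmetry. apply H3; [exact I | apply HinvA | apply HinvA].
Qed.
Lemma aia a : a ** i a ** a = a. Proof. apply HinvA. Qed.
Lemma iai a : i a ** a ** i a = i a. Proof. apply HinvA. Qed.
Lemma E_idem a : E a ** E a = E a.
Proof. rewrite <- sA, aia. reflexivity. Qed.
Lemma ia_idem a : i a ** a ** (i a ** a) = i a ** a.
Proof. rewrite <- sA, iai. reflexivity. Qed.
Lemma ai_idem a : a ** i a ** (a ** i a) = a ** i a.
Proof. exact (E_idem a). Qed.
Lemma E_comm a : a ** i a = i a ** a.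
Proof.
  assert (H1 : a ** i a = (i a ** a) ** (a ** i a)).
  { rewrite <- (aia a) at 1. rewrite (sA a (i a) a).
    rewrite <- (cent _ (ia_idem a) a). rewrite !sA. reflexivity. }
  assert (H2 : i a ** a = (a ** i a) ** (i a ** a)).
  { rewrite <- (iai a) at 1. rewrite (sA (i a) a (i a)).
    rewrite <- (cent _ (ai_idem a) (i a)). rewrite !sA. reflexivity. }
  rewrite H1. rewrite (cent _ (ia_idem a)). rewrite <- H2. reflexivity.
Qed.

Ltac aeq := repeat rewrite sA; reflexivity.

Lemma ii a : i (i a) = a.
Proof. symmetry. apply uniq; [apply iai | apply aia]. Qed.
Lemma Ea a : E a ** a = a. Proof. apply aia. Qed.
Lemma aE a : a ** E a = a. Proof. rewrite E_comm, <- sA. apply aia. Qed.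
Lemma iE a : i a ** E a = i a. Proof. rewrite <- sA. apply iai. Qed.
Lemma Ei a : E a ** i a = i a. Proof. rewrite E_comm. apply iai. Qed.
Lemma i_idem e : e ** e = e -> i e = e.
Proof. intro H. symmetry. apply uniq; rewrite !H; reflexivity. Qed.
Lemma i_mul a b : i (a ** b) = i b ** i a.
Proof.
  symmetry. apply uniq.
  - transitivity (a ** (E b ** (i a ** a)) ** b). aeq.
    rewrite (cent _ (E_idem b)). transitivity (E a ** a ** (E b ** b)). aeq.
    rewrite Ea, Ea. reflexivity.
  - transitivity (i b ** ((i a ** a) ** E b) ** i a). aeq.
    rewrite <- (cent _ (E_idem b)). rewrite <- E_comm.
    transitivity ((i b ** E b) ** (E a ** i a)). aeq.
    rewrite iE, Ei. reflexivity.
Qed.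
Lemma E_mul a b : E (a ** b) = E a ** E b.
Proof.
  rewrite i_mul. transitivity (a ** E b ** i a). aeq.
  rewrite sA, (cent _ (E_idem b)). rewrite <- sA. reflexivity.
Qed.
Lemma E_i a : E (i a) = E a. Proof. rewrite ii. symmetry. apply E_comm. Qed.
Lemma E_E a : E (E a) = E a. Proof. rewrite (i_idem (E a)) by apply E_idem. apply E_idem. Qed.

Section Ideal.
Variable I : A -> Prop.
Hypothesis HI : forall a b, I a -> I (a ** b) /\ I (b ** a).
Lemma I_r a b : I a -> I (a ** b). Proof. apply HI. Qed.
Lemma I_l a b : I a -> I (b ** a). Proof. apply HI. Qed.
Lemma I_E a : I a -> I (E a). Proof. apply I_r. Qed.
Lemma I_i a : I a -> I (i a). Proof. intro H. rewrite <- iai. apply I_r, I_l, H. Qed.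
Lemma I_Er a : I (E a) -> I a. Proof. intro H. rewrite <- Ea. apply I_r, H. Qed.
End Ideal.

Lemma setprod_iff (I J : A -> Prop) :
  (forall a b, I a -> I (a ** b) /\ I (b ** a)) ->
  (forall a b, J a -> J (a ** b) /\ J (b ** a)) ->
  setprod mulA I J = (fun s => I s /\ J s).
Proof.
  intros HI HJ. extensionality s. apply propositional_extensionality. split.
  - intros (a & b & Ha & Hb & ->). split; [apply I_r | apply I_l]; auto.
  - intros [H1 H2]. exists (E s), s. repeat split; auto. apply I_E; auto. symmetry; apply Ea.
Qed.

Section Mult.
Variable T : A -> Prop.
Hypothesis HT : forall a b, T a -> T (a ** b) /\ T (b ** a).
Variables L R : A -> A.
Hypothesis HM : IsMultiplierOn mulA T L R.
Lemma MR_mul a s : T s -> R (a ** s) = a ** R s.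
Proof.
  intro Hs. destruct HM as (_ & _ & _ & H4 & _).
  replace (a ** s) with ((a ** E s) ** s) by (rewrite sA, Ea; reflexivity).
  rewrite H4; auto. rewrite sA, <- H4; auto. rewrite Ea. reflexivity.
  apply I_E; auto. apply I_l; auto. apply I_E; auto.
Qed.
Lemma ML_mul a s : T s -> L (s ** a) = L s ** a.
Proof.
  intro Hs. destruct HM as (_ & _ & H3 & _ & _).
  replace (s ** a) with (s ** (E s ** a)) by (rewrite <- sA, aE; reflexivity).
  rewrite H3; auto. rewrite <- sA, <- H3; auto. rewrite aE. reflexivity.
  apply I_E; auto. apply I_r; auto. apply I_E; auto.
Qed.
Lemma MLR_idem e : T e -> e ** e = e -> L e = R e.
Proof.
  intros He Hee. destruct HM as (H1 & H2 & H3 & H4 & H5).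
  rewrite <- Hee at 1. rewrite H3; auto. rewrite <- (cent _ Hee). rewrite H5; auto.
  rewrite <- (cent _ Hee). rewrite <- H4; auto. rewrite Hee. reflexivity.
Qed.
End Mult.

Lemma MR_E T (HT : forall a b, T a -> T (a ** b) /\ T (b ** a)) L R L' R'
  (HM : IsMultiplierOn mulA T L R) (HM' : IsMultiplierOn mulA T L' R') s :
  T s -> R' (R s) = s -> E (R s) = E s.
Proof.
  intros Hs Hinv. assert (HRs : T (R s)) by (apply HM; auto).
  assert (H1 : R s = E s ** R s). { rewrite <- (MR_mul T HT L R HM); auto. rewrite Ea. reflexivity. }
  assert (H2 : s = E (R s) ** s).
  { rewrite <- Hinv at 1. rewrite <- (Ea (R s)) at 1.
    rewrite (MR_mul T HT L' R' HM'); auto. rewrite Hinv. reflexivity. }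
  assert (E1 : E (R s) = E s ** E (R s)) by (transitivity (E (E s ** R s)); [rewrite <- H1; reflexivity | rewrite E_mul, E_E; reflexivity]).
  assert (E2 : E s = E (R s) ** E s) by (transitivity (E (E (R s) ** s)); [rewrite <- H2; reflexivity | rewrite E_mul, E_E; reflexivity]).
  rewrite E1. rewrite (cent _ (E_idem s)). symmetry; exact E2.
Qed.
Lemma ML_E T (HT : forall a b, T a -> T (a ** b) /\ T (b ** a)) L R L' R'
  (HM : IsMultiplierOn mulA T L R) (HM' : IsMultiplierOn mulA T L' R') s :
  T s -> L' (L s) = s -> E (L s) = E s.
Proof.
  intros Hs Hinv. assert (HLs : T (L s)) by (apply HM; auto).
  assert (H1 : L s = L s ** E s). { rewrite <- (ML_mul T HT L R HM); auto. rewrite aE. reflexivity. }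
  assert (H2 : s = s ** E (L s)).
  { rewrite <- Hinv at 1. rewrite <- (aE (L s)) at 1.
    rewrite (ML_mul T HT L' R' HM'); auto. rewrite Hinv. reflexivity. }
  assert (E1 : E (L s) = E (L s) ** E s) by (transitivity (E (L s ** E s)); [rewrite <- H1; reflexivity | rewrite E_mul, E_E; reflexivity]).
  assert (E2 : E s = E s ** E (L s)) by (transitivity (E (s ** E (L s))); [rewrite <- H2; reflexivity | rewrite E_mul, E_E; reflexivity]).
  rewrite E1. rewrite (cent _ (E_idem (L s))). symmetry; exact E2.
Qed.

Variables (D : G -> A -> Prop) (th thi : G -> A -> A) (wL wR wiL wiR : G -> G -> A -> A).
Hypothesis HT : IsTwistedPartialAction mulG oneG invG mulA D th thi wL wR wiL wiR.

Ltac dT := destruct HT as (Hne & Hid & Hth & Hthi & Hthith & Hththi & Hhom & HUM & Hi1 & Hi2 & HD1 & Hth1 & Hiii & Hiv & Hv & Hvi).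

Lemma Did x a b : D x a -> D x (a ** b) /\ D x (b ** a). Proof. dT. auto. Qed.
Lemma Dr x a b : D x a -> D x (a ** b). Proof. apply Did. Qed.
Lemma Dl x a b : D x a -> D x (b ** a). Proof. apply Did. Qed.
Lemma DE x a : D x a -> D x (E a). Proof. apply Dr. Qed.
Lemma Di x a : D x a -> D x (i a). Proof. apply I_i. intros; apply Did; auto. Qed.
Lemma DEr x a : D x (E a) -> D x a. Proof. apply I_Er. intros; apply Did; auto. Qed.
Lemma Dne x : exists a, D x a. Proof. dT. auto. Qed.
Lemma Dth x a : D (invG x) a -> D x (th x a). Proof. dT. auto. Qed.
Lemma Dthi x a : D x a -> D (invG x) (thi x a). Proof. dT. auto. Qed.
Lemma thith x a : D (invG x) a -> thi x (th x a) = a. Proof. dT. auto. Qed.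
Lemma ththi x a : D x a -> th x (thi x a) = a. Proof. dT. auto. Qed.
Lemma thM x a b : D (invG x) a -> D (invG x) b -> th x (a ** b) = th x a ** th x b.
Proof. dT. auto. Qed.
Lemma D1 a : D oneG a. Proof. dT. auto. Qed.
Lemma th1 a : th oneG a = a. Proof. dT. auto. Qed.
Lemma thi1 a : thi oneG a = a.
Proof. rewrite <- (th1 a) at 1. apply thith. rewrite ginv1. apply D1. Qed.
Lemma UM x y : IsUnitMultiplierOn mulA (fun s => D x s /\ D (mulG x y) s)
   (wL x y) (wR x y) (wiL x y) (wiR x y).
Proof. dT. rewrite <- setprod_iff; auto; intros; apply Did; auto. Qed.
Lemma iii_f x y a : D (invG x) a -> D y a -> D x (th x a) /\ D (mulG x y) (th x a).
Proof.
  intros H1 H2. dT. destruct (Hiii x y (th x a)) as [Hf _].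
  rewrite !setprod_iff in Hf by (intros; apply Did; auto).
  apply Hf. exists a. split; auto.
Qed.
Lemma iii_b x y a : D x a -> D (mulG x y) a -> D (invG x) (thi x a) /\ D y (thi x a).
Proof.
  intros H1 H2. dT. destruct (Hiii x y a) as [_ Hb].
  rewrite !setprod_iff in Hb by (intros; apply Did; auto).
  destruct (Hb (conj H1 H2)) as [t [[Ht1 Ht2] ->]]. rewrite thith; auto.
Qed.
Lemma iv x y s : D (invG y) s -> D (mulG (invG y) (invG x)) s ->
  th x (th y s) = wiR x y (wL x y (th (mulG x y) s)).
Proof. intros. dT. apply Hiv. rewrite setprod_iff by (intros; apply Did; auto). auto. Qed.
Lemma v x s : D x s -> wL oneG x s = s /\ wR oneG x s = s /\ wL x oneG s = s /\ wR x oneG s = s.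
Proof. dT. auto. Qed.
Lemma vi x y z s : D (invG x) s -> D y s -> D (mulG y z) s ->
  wR x (mulG y z) (th x (wR y z s)) = wR (mulG x y) z (wR x y (th x s)).
Proof.
  intros. dT. apply Hvi. rewrite (setprod_iff (D (invG x)) (D y)) by (intros; apply Did; auto).
  rewrite setprod_iff. auto.
  intros a b [Ha Hb]. repeat split; first [apply Dr; assumption | apply Dl; assumption].
  intros; apply Did; auto.
Qed.

Section W.
Variables x y : G.
Let T := fun s => D x s /\ D (mulG x y) s.
Lemma T_id : forall a b, T a -> T (a ** b) /\ T (b ** a).
Proof. intros a b [H1 H2]. unfold T; repeat split; first [apply Dr; assumption | apply Dl; assumption]. Qed.
Lemma wR_in s : D x s -> D (mulG x y) s -> D x (wR x y s) /\ D (mulG x y) (wR x y s).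
Proof. intros. destruct (UM x y) as [[_ [HH _]] _]. apply HH. split; auto. Qed.
Lemma wL_in s : D x s -> D (mulG x y) s -> D x (wL x y s) /\ D (mulG x y) (wL x y s).
Proof. intros. destruct (UM x y) as [[HH _] _]. apply HH. split; auto. Qed.
Lemma wiR_in s : D x s -> D (mulG x y) s -> D x (wiR x y s) /\ D (mulG x y) (wiR x y s).
Proof. intros. destruct (UM x y) as [_ [[_ [HH _]] _]]. apply HH. split; auto. Qed.
Lemma wRiR s : D x s -> D (mulG x y) s -> wR x y (wiR x y s) = s.
Proof. intros. destruct (UM x y) as [_ [_ HH]]. apply HH. split; auto. Qed.
Lemma wiRR s : D x s -> D (mulG x y) s -> wiR x y (wR x y s) = s.
Proof. intros. destruct (UM x y) as [_ [_ HH]]. apply HH. split; auto. Qed.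
Lemma wiLL s : D x s -> D (mulG x y) s -> wiL x y (wL x y s) = s.
Proof. intros. destruct (UM x y) as [_ [_ HH]]. apply HH. split; auto. Qed.
Let M1 := proj1 (UM x y).
Let M2 := proj1 (proj2 (UM x y)).
Lemma wR_mul a s : D x s -> D (mulG x y) s -> wR x y (a ** s) = a ** wR x y s.
Proof. intros. eapply MR_mul; [exact T_id | exact M1 | split; auto]. Qed.
Lemma wL_mul a s : D x s -> D (mulG x y) s -> wL x y (s ** a) = wL x y s ** a.
Proof. intros. eapply ML_mul; [exact T_id | exact M1 | split; auto]. Qed.
Lemma wLR_idem e : D x e -> D (mulG x y) e -> e ** e = e -> wL x y e = wR x y e.
Proof. intros. eapply MLR_idem; [exact M1 | split; auto | auto]. Qed.
Lemma wR_E s : D x s -> D (mulG x y) s -> E (wR x y s) = E s.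
Proof. intros. eapply MR_E; [exact T_id | exact M1 | exact M2 | split; auto | apply wiRR; auto]. Qed.
Lemma wL_E s : D x s -> D (mulG x y) s -> E (wL x y s) = E s.
Proof. intros. eapply ML_E; [exact T_id | exact M1 | exact M2 | split; auto | apply wiLL; auto]. Qed.
Lemma wiR_E s : D x s -> D (mulG x y) s -> E (wiR x y s) = E s.
Proof. intros. eapply MR_E; [exact T_id | exact M2 | exact M1 | split; auto | apply wRiR; auto]. Qed.
End W.

Lemma th_i x a : D (invG x) a -> th x (i a) = i (th x a).
Proof.
  intro Ha. assert (Hi : D (invG x) (i a)) by (apply Di; auto).
  assert (Hai : D (invG x) (a ** i a)) by (apply Dr; auto).
  assert (Hia : D (invG x) (i a ** a)) by (apply Dr; auto).
  apply uniq.
  - rewrite <- thM by auto. rewrite <- thM by auto. rewrite aia. reflexivity.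
  - rewrite <- thM by auto. rewrite <- thM by auto. rewrite iai. reflexivity.
Qed.
Lemma th_E x a : D (invG x) a -> th x (E a) = E (th x a).
Proof. intro. rewrite thM, th_i; auto. apply Di; auto. Qed.
Lemma thiM x a b : D x a -> D x b -> thi x (a ** b) = thi x a ** thi x b.
Proof.
  intros. transitivity (thi x (th x (thi x a) ** th x (thi x b))).
  rewrite !ththi; auto. rewrite <- thM, thith; auto using Dthi. apply Dr, Dthi; auto.
Qed.
Lemma thi_E x a : D x a -> thi x (E a) = E (thi x a).
Proof.
  intros. transitivity (thi x (E (th x (thi x a)))). rewrite ththi; auto.
  rewrite <- th_E, thith; auto using Dthi, DE.
Qed.
Lemma th_inv_idem x e : D x e -> e ** e = e -> th (invG x) e = thi x e.
Proof.
  intros He Hee.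
  assert (H : th x (th (invG x) e) = e).
  { assert (Hd : D (mulG x (invG x)) e) by (rewrite gVr; apply D1).
    rewrite iv by (rewrite ginvinv; rewrite ?gVr; auto; apply D1).
    rewrite (gVr x), th1. rewrite wLR_idem by auto. apply wiRR; auto. }
  rewrite <- H at 2. rewrite thith; auto. apply Dth. rewrite ginvinv; auto.
Qed.

Lemma inner_in x y a b : D x a -> D y b ->
  D x (th x (thi x a ** b)) /\ D (mulG x y) (th x (thi x a ** b)).
Proof. intros. apply iii_f. apply Dr, Dthi; auto. apply Dl; auto. Qed.

Lemma thxy_in x y r : D (invG y) r -> D (mulG (invG y) (invG x)) r ->
  D x (th (mulG x y) r) /\ D (mulG x y) (th (mulG x y) r).
Proof.
  intros H1 H2. destruct (iii_f (mulG x y) (invG y) r) as [Ha Hb].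
  rewrite ginvM; auto. auto. rewrite gA, gVr, g1r in Hb. auto.
Qed.

Lemma iv' x y s : D (invG y) s -> D (mulG (invG y) (invG x)) s ->
  wR x y (th x (th y s)) = wL x y (th (mulG x y) s).
Proof.
  intros H1 H2. destruct (thxy_in x y s H1 H2) as [Ha Hb].
  rewrite iv; auto. apply wRiR; apply wL_in; auto.
Qed.

Lemma assoc_core x y z a b c : D x a -> D y b -> D z c ->
  wR (mulG x y) z (th (mulG x y) (thi (mulG x y) (wR x y (th x (thi x a ** b))) ** c))
  = wR x (mulG y z) (th x (thi x a ** wR y z (th y (thi y b ** c)))).
Proof.
  intros Ha Hb Hc.
  set (a' := thi x a). assert (Ha' : D (invG x) a') by (apply Dthi; auto).
  set (b' := thi y b). assert (Hb' : D (invG y) b') by (apply Dthi; auto).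
  set (t := th y (b' ** c)).
  destruct (inner_in y z b c Hb Hc) as [Ht1 Ht2]. fold b' t in Ht1, Ht2.
  rewrite <- wR_mul by auto.
  rewrite vi by (first [apply Dl; assumption | apply Dr; assumption]).
  f_equal.
  set (u := a' ** E b).
  assert (Hu1 : D y u) by (apply Dl, DE; auto).
  assert (Hu2 : D (invG x) u) by (apply Dr; auto).
  destruct (iii_b y (mulG (invG y) (invG x)) u) as [Hu3 Hu4]; auto.
  rewrite gKl; auto.
  set (r := thi y u ** b').
  assert (Hr1 : D (invG y) r) by (apply Dr; auto).
  assert (Hr2 : D (mulG (invG y) (invG x)) r) by (apply Dr; auto).
  assert (Hab : a' ** b = th y r).
  { unfold r. rewrite thM, ththi by auto. unfold b'. rewrite ththi by auto.
    unfold u. rewrite sA, Ea. reflexivity. }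
  rewrite Hab, iv' by auto.
  destruct (thxy_in x y r Hr1 Hr2) as [Hv1 Hv2].
  set (v := th (mulG x y) r) in *.
  destruct (wL_in x y v Hv1 Hv2) as [HL1 HL2].
  destruct (iii_b (mulG x y) (invG y) (wL x y v)) as [Hm1 Hm2]; auto.
  rewrite gA, gVr, g1r; auto.
  set (m := thi (mulG x y) (wL x y v)) in *.
  assert (HEm : E m = E r).
  { unfold m. rewrite <- thi_E by auto. rewrite wL_E by auto. unfold v.
    rewrite <- th_E, thith; auto.
    rewrite ginvM. apply DE; auto. rewrite ginvM; auto. }
  assert (Hr3 : D (invG (mulG x y)) r) by (rewrite ginvM; auto).
  assert (Hmc : D (invG (mulG x y)) (E m ** c)) by (apply Dr, DE; auto).
  assert (LHS : th (mulG x y) (m ** c) = wL x y (th (mulG x y) (r ** c))).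
  { rewrite <- (aE m) at 1. rewrite sA, thM by auto. unfold m at 1. rewrite ththi by auto.
    fold m. rewrite <- wL_mul by auto. unfold v. rewrite <- thM by auto.
    rewrite HEm, <- sA, aE. reflexivity. }
  rewrite LHS.
  assert (RHS : a' ** t = th y (r ** c)).
  { unfold r. rewrite sA, thM, ththi by (auto; apply Dr; auto). fold t.
    unfold u. rewrite sA. f_equal.
    assert (Hbe : E b = th y (E b')) by (unfold b'; rewrite th_E, ththi; auto).
    rewrite Hbe. unfold t. rewrite <- thM by (auto; apply Dr; auto).
    rewrite <- sA, Ea. reflexivity. }
  rewrite RHS, iv'; auto; apply Dr; auto.
Qed.
Lemma inv_sg_of {T} (S : T -> Prop) (mul : T -> T -> T) :
 (forall a b, S a -> S b -> S (mul a b)) ->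
 (forall a b c, S a -> S b -> S c -> mul (mul a b) c = mul a (mul b c)) ->
 (forall e f, S e -> S f -> mul e e = e -> mul f f = f -> mul e f = mul f e) ->
 (forall a, S a -> exists b, S b /\ mul (mul a b) a = a /\ mul (mul b a) b = b) ->
 IsInvSemigroupOn S mul.
Proof.
  intros Hcl Has Hcom Hex. split; [exact Hcl | split; [exact Has |]].
  intros a Ha. destruct (Hex a Ha) as [b [Hb [H1 H2]]]. exists b. repeat split; auto.
  intros c Hc H3 H4.
  assert (Iba : mul (mul b a) (mul b a) = mul b a).
  { rewrite <- Has, H2; auto. }
  assert (Ica : mul (mul c a) (mul c a) = mul c a).
  { rewrite <- Has, H4; auto. }
  assert (Iab : mul (mul a b) (mul a b) = mul a b).
  { rewrite <- Has, H1; auto. }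
  assert (Iac : mul (mul a c) (mul a c) = mul a c).
  { rewrite <- Has, H3; auto. }
  assert (E1 : b = mul (mul c a) b).
  { transitivity (mul (mul (mul b a) (mul c a)) b).
    - rewrite (Has b a (mul c a)), <- (Has a c a), H3, H2; auto.
    - rewrite (Hcom (mul b a) (mul c a)); auto. rewrite (Has (mul c a) (mul b a) b), H2; auto. }
  assert (E2 : c = mul (mul c a) b).
  { transitivity (mul c (mul (mul a b) (mul a c))).
    - rewrite <- (Has (mul a b) a c), H1, <- (Has c a c), H4; auto.
    - rewrite (Hcom (mul a b) (mul a c)); auto.
      rewrite <- (Has c (mul a c) (mul a b)), <- (Has c a c), H4, (Has c a b); auto. }
  congruence.
Qed.

Local Notation cpm := (cp_mul mulG mulA th thi wR).
Local Notation ecpm := (ecp_mul mulG mulA th thi).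
Local Notation pi := (cp_pi mulA invA).

Lemma cp_closed p q : CP D p -> CP D q -> CP D (cpm p q).
Proof.
  destruct p as [a x], q as [b y]; unfold CP, cp_mul; simpl; intros.
  destruct (inner_in x y a b) as [H1 H2]; auto. apply wR_in; auto.
Qed.
Lemma cp_assoc p q r : CP D p -> CP D q -> CP D r -> cpm (cpm p q) r = cpm p (cpm q r).
Proof.
  destruct p as [a x], q as [b y], r as [c z]; unfold CP, cp_mul; simpl; intros.
  f_equal. apply assoc_core; auto. apply gA.
Qed.
Lemma cp_mul1 a b : cpm (a, oneG) (b, oneG) = (a ** b, oneG).
Proof.
  unfold cp_mul; simpl. rewrite thi1, th1, g1l. f_equal. apply (v oneG). apply D1.
Qed.
Lemma cp_idem p : CP D p -> cpm p p = p -> snd p = oneG /\ fst p ** fst p = fst p.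
Proof.
  destruct p as [a x]; intros Hp H.
  assert (Hx : x = oneG).
  { apply gidem. apply (f_equal snd) in H. exact H. }
  subst x. rewrite cp_mul1 in H. injection H; auto.
Qed.
Lemma cp_idem_comm e f : CP D e -> CP D f -> cpm e e = e -> cpm f f = f -> cpm e f = cpm f e.
Proof.
  intros He Hf Hee Hff. destruct (cp_idem e He Hee) as [H1 H2]. destruct (cp_idem f Hf Hff) as [H3 H4].
  destruct e as [e x], f as [f y]; simpl in *; subst.
  rewrite !cp_mul1. f_equal. apply cent; auto.
Qed.

Lemma cp_inv_ex p : CP D p -> exists q, CP D q /\ cpm (cpm p q) p = p /\ cpm (cpm q p) q = q.
Proof.
  destruct p as [a x]. unfold CP; simpl. intro Ha.
  set (a' := thi x a). assert (Ha' : D (invG x) a') by (apply Dthi; auto).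
  assert (Hd1 : D (mulG x (invG x)) (E a)) by (rewrite gVr; apply D1).
  assert (HEa : D x (E a)) by (apply DE; auto).
  set (k := wiR x (invG x) (E a)).
  destruct (wiR_in x (invG x) (E a) HEa Hd1) as [Hk1 Hk2]. fold k in Hk1, Hk2.
  set (b := i a' ** thi x k).
  assert (Hb : D (invG x) b) by (apply Dr, Di; auto).
  assert (Hpq : cpm (a, x) (b, invG x) = (E a, oneG)).
  { unfold cp_mul; simpl. rewrite gVr. f_equal.
    assert (H : a' ** b = thi x k).
    { unfold b. rewrite <- sA.
      assert (Hek : E (thi x k) = E a').
      { rewrite <- thi_E by auto. unfold k. rewrite wiR_E by auto. rewrite E_E.
        unfold a'. apply thi_E; auto. }
      rewrite <- Hek. apply Ea. }
    fold a'. rewrite H, ththi by auto. unfold k. apply wRiR; auto. }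
  exists (b, invG x). split; [exact Hb |]. split.
  - rewrite Hpq. unfold cp_mul; simpl. rewrite thi1, th1, g1l. f_equal.
    rewrite Ea. apply (v x). auto.
  - rewrite cp_assoc by (unfold CP; simpl; auto).
    rewrite Hpq. unfold cp_mul; simpl. rewrite g1r. f_equal.
    assert (Hthb : th (invG x) (thi (invG x) b ** E a) = b).
    { rewrite thM by first [apply Dthi; auto | rewrite ginvinv; auto].
      rewrite ththi by auto.
      rewrite th_inv_idem by (auto; apply E_idem).
      rewrite thi_E by auto. fold a'.
      unfold b. rewrite sA, <- (cent _ (E_idem a')), <- sA, iE. reflexivity. }
    rewrite Hthb. apply (v (invG x)); auto.
Qed.

Lemma CP_inv : IsInvSemigroupOn (CP D) cpm.
Proof.
  apply inv_sg_of. apply cp_closed. apply cp_assoc. apply cp_idem_comm. apply cp_inv_ex.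
Qed.

Lemma pi_hom p q : CP D p -> CP D q -> pi (cpm p q) = ecpm (pi p) (pi q).
Proof.
  destruct p as [a x], q as [b y]; unfold CP, cp_mul, ecp_mul, cp_pi; simpl; intros Ha Hb.
  f_equal. destruct (inner_in x y a b Ha Hb) as [H1 H2].
  rewrite wR_E by auto. rewrite <- th_E by (apply Dr, Dthi; auto).
  rewrite E_mul, thi_E by auto. reflexivity.
Qed.
Lemma pi_in p : CP D p -> ECP mulA D (pi p).
Proof. destruct p as [a x]; unfold CP, ECP, cp_pi; simpl; intros. split. apply DE; auto. apply E_idem. Qed.
Lemma ECP_CP p : ECP mulA D p -> CP D p.
Proof. destruct p; unfold CP, ECP; simpl; tauto. Qed.
Lemma pi_id p : ECP mulA D p -> pi p = p.
Proof.
  destruct p as [e x]; unfold ECP, cp_pi; simpl; intros [_ H]. rewrite (i_idem e H), H. reflexivity.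
Qed.
Lemma ecp_pi p q : ECP mulA D p -> ECP mulA D q -> ecpm p q = pi (cpm p q).
Proof.
  intros Hp Hq. rewrite pi_hom, !pi_id; auto; apply ECP_CP; auto.
Qed.
Lemma ecp_mul1 e f : ecpm (e, oneG) (f, oneG) = (e ** f, oneG).
Proof. unfold ecp_mul; simpl. rewrite thi1, th1, g1l. reflexivity. Qed.

Lemma ECP_inv : IsInvSemigroupOn (ECP mulA D) ecpm.
Proof.
  apply inv_sg_of.
  - intros p q Hp Hq. rewrite ecp_pi; auto. apply pi_in, cp_closed; apply ECP_CP; auto.
  - intros p q r Hp Hq Hr.
    assert (Hpq : ECP mulA D (ecpm p q)) by (rewrite ecp_pi; auto; apply pi_in, cp_closed; apply ECP_CP; auto).
    assert (Hqr : ECP mulA D (ecpm q r)) by (rewrite ecp_pi; auto; apply pi_in, cp_closed; apply ECP_CP; auto).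
    rewrite (ecp_pi p q), (ecp_pi q r) by auto.
    assert (L1 : ecpm (pi (cpm p q)) r = pi (cpm (cpm p q) r)).
    { rewrite (pi_hom (cpm p q) r) by (try apply cp_closed; apply ECP_CP; auto). rewrite (pi_id r) by auto. reflexivity. }
    assert (L2 : ecpm p (pi (cpm q r)) = pi (cpm p (cpm q r))).
    { rewrite (pi_hom p (cpm q r)) by (try apply cp_closed; apply ECP_CP; auto). rewrite (pi_id p) by auto. reflexivity. }
    rewrite L1, L2, cp_assoc; auto; apply ECP_CP; auto.
  - intros [e x] [f y] He Hf Hee Hff.
    assert (x = oneG) by (apply gidem; apply (f_equal snd) in Hee; exact Hee).
    assert (y = oneG) by (apply gidem; apply (f_equal snd) in Hff; exact Hff). subst.
    rewrite !ecp_mul1. f_equal. apply cent. apply He.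
  - intros p Hp. destruct (cp_inv_ex p (ECP_CP p Hp)) as [q [Hq [H1 H2]]].
    exists (pi q). split. apply pi_in; auto.
    assert (Hpq : CP D (cpm p q)) by (apply cp_closed; auto; apply ECP_CP; auto).
    assert (Hqp : CP D (cpm q p)) by (apply cp_closed; auto; apply ECP_CP; auto).
    split.
    + rewrite <- (pi_id p) at 1 2 by auto. rewrite <- !pi_hom; auto; try apply ECP_CP; auto.
      rewrite H1. apply pi_id; auto.
    + rewrite <- (pi_id p) at 1 by auto. rewrite <- !pi_hom; auto; try apply ECP_CP; auto.
      rewrite H2. reflexivity.
Qed.

Lemma i_mono : IsMonoOn (full A) mulA (CP D) cpm (cp_i oneG).
Proof.
  split. split.
  - intros a _. apply D1.
  - intros a b _ _. unfold cp_i. rewrite cp_mul1. reflexivity.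
  - intros a b _ _ H. unfold cp_i in H. injection H; auto.
Qed.

Lemma main_result :
  IsExtensionByGroup mulA (CP D) (cp_mul mulG mulA th thi wR) mulG oneG
    (cp_i oneG) cp_j /\
  IsEpiOn (CP D) (cp_mul mulG mulA th thi wR) (ECP mulA D) (ecp_mul mulG mulA th thi)
    (cp_pi mulA invA) /\
  IsEpiOn (ECP mulA D) (ecp_mul mulG mulA th thi) (full G) mulG cp_kappa /\
  IsExtensionByInvSemigroup mulA (CP D) (cp_mul mulG mulA th thi wR)
    (ECP mulA D) (ecp_mul mulG mulA th thi) (cp_i oneG) (cp_pi mulA invA) /\
  (forall u, CP D u -> cp_j u = cp_kappa (cp_pi mulA invA u)).
Proof.
  assert (Hpi : IsEpiOn (CP D) cpm (ECP mulA D) ecpm pi).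
  { split. split. apply pi_in. apply pi_hom.
    intros q Hq. exists q. split. apply ECP_CP; auto. apply pi_id; auto. }
  split; [| split; [exact Hpi | split; [| split]]].
  - split; [exact CP_inv | split; [exact i_mono | split]].
    + split. split. intros; exact I. intros [a x] [b y] _ _. reflexivity.
      intros x _. destruct (Dne x) as [a Ha]. exists (a, x). split; auto.
    + intros [a x] Hu. unfold cp_j, cp_i; simpl. split.
      * intros ->. exists a. reflexivity.
      * intros [a0 H]. injection H; auto.
  - split. split. intros; exact I. intros [a x] [b y] _ _. reflexivity.
    intros x _. destruct (Dne x) as [a Ha]. exists (E a, x). split; [| reflexivity].
    split. apply DE; auto. apply E_idem.
  - split; [exact CP_inv | split; [exact ECP_inv | split; [exact i_mono | split; [exact Hpi | split]]]].
    + intros e e' He He' Hpe.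
      destruct (cp_idem e (proj1 He) (proj2 He)) as [H1 H2].
      destruct (cp_idem e' (proj1 He') (proj2 He')) as [H3 H4].
      destruct e as [a x], e' as [b y]; simpl in *; subst.
      unfold cp_pi in Hpe; simpl in Hpe. rewrite (i_idem a H2), (i_idem b H4), H2, H4 in Hpe. exact Hpe.
    + intros [a x] Hu. unfold cp_i, cp_pi; simpl. split.
      * intros [_ H]. unfold ecp_mul in H; simpl in H. apply (f_equal snd) in H; simpl in H.
        apply gidem in H. subst. exists a. reflexivity.
      * intros [a0 H]. injection H as H1 H2. rewrite <- H2. split.
        apply (pi_in (a, oneG)). apply D1.
        rewrite ecp_mul1, E_idem. reflexivity.
  - intros; reflexivity.
Qed.
End Main.

Theorem proposition5p15
  (G : Type) (mulG : G -> G -> G) (oneG : G) (invG : G -> G)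
  (HG : IsGroup mulG oneG invG)
  (A : Type) (mulA : A -> A -> A) (invA : A -> A)
  (HA : IsSemilatticeOfGroups mulA)
  (HinvA : forall a, mulA (mulA a (invA a)) a = a /\
                     mulA (mulA (invA a) a) (invA a) = invA a)
  (D : G -> A -> Prop) (th thi : G -> A -> A) (wL wR wiL wiR : G -> G -> A -> A)
  (HTheta : IsTwistedPartialAction mulG oneG invG mulA D th thi wL wR wiL wiR) :
  IsExtensionByGroup mulA (CP D) (cp_mul mulG mulA th thi wR) mulG oneG
    (cp_i oneG) cp_j /\
  IsEpiOn (CP D) (cp_mul mulG mulA th thi wR) (ECP mulA D) (ecp_mul mulG mulA th thi)
    (cp_pi mulA invA) /\
  IsEpiOn (ECP mulA D) (ecp_mul mulG mulA th thi) (full G) mulG cp_kappa /\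
  IsExtensionByInvSemigroup mulA (CP D) (cp_mul mulG mulA th thi wR)
    (ECP mulA D) (ecp_mul mulG mulA th thi) (cp_i oneG) (cp_pi mulA invA) /\
  (forall u, CP D u -> cp_j u = cp_kappa (cp_pi mulA invA u)).
Proof.
  eapply main_result; eassumption.
Qed.
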